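(* Let $\vdash\subseteq Sqt$ satisfy (A), (Mon), (Cut), (Com), ($\wedge$I), ($\wedge$E), ($\to$0), ($\to$1), ($\to$2). For all $\varphi,\psi\in Form$ and $\Gamma\subseteq Form$, if $\Gamma\nvdash\varphi\to\psi$, then there is a $\vdash$-deduction closed $\Delta\subseteq Form$ such that $\varphi\in\Delta$, $\psi\notin\Delta$, $\Gamma R_\to\Delta$, and for every $\chi\notin\Delta$, $\psi\in\Gamma(\Delta,\chi)$.
   Context: $Form$: $\varphi::=p\mid\bot\mid(\varphi\wedge\varphi)\mid(\varphi\to\varphi)$ over a countable set $P0$ ($\wedge$ left-associative, binds tighter than $\to$). Sequents are pairs $(\Gamma,\varphi)$, $\Gamma\subseteq Form$; $\Gamma\vdash\varphi$ means $(\Gamma,\varphi)\in\vdash$, $\psi\vdash\varphi$ means $\{\psi\}\vdash\varphi$, $\vdash\varphi$ means $\emptyset\vdash\varphi$. Rules (for all $\Gamma,\Delta\subseteq Form$, formulas): (A) $\Gamma\cup\{\varphi\}\vdash\varphi$; (Mon) $\Gamma\subseteq\Delta$, $\Gamma\vdash\varphi\Rightarrow\Delta\vdash\varphi$; (Cut) $\Gamma\cup\{\psi\}\vdash\varphi$, $\Delta\vdash\psi\Rightarrow\Gamma\cup\Delta\vdash\varphi$; (Com) $\Gamma\vdash\varphi\Rightarrow\Gamma'\vdash\varphi$ for some finite $\Gamma'\subseteq\Gamma$; ($\wedge$I) $\{\varphi,\psi\}\vdash\varphi\wedge\psi$; ($\wedge$E) $\varphi\wedge\psi\vdash\varphi$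 and $\varphi\wedge\psi\vdash\psi$; ($\to$0) $\vdash\varphi\to\varphi$; ($\to$1) $\Gamma\vdash\varphi\Rightarrow\{\psi\to\chi:\chi\in\Gamma\}\vdash\psi\to\varphi$; ($\to$2) $\{\varphi\to\psi,\psi\to\chi\}\vdash\varphi\to\chi$. $\Delta$ is $\vdash$-deduction closed iff $\Delta\vdash\psi$ implies $\psi\in\Delta$. $\Gamma R_\to\Delta$ iff for all $\varphi,\psi$, $\varphi\to\psi\in\Gamma$ and $\varphi\in\Delta$ imply $\psi\in\Delta$. $\Gamma(\Delta,\chi)=\{\psi\in Form:$ there is $\alpha\in\Delta$ with $\Gamma\vdash\alpha\wedge\chi\to\psi\}$. *)

(* Defs.v *)
From Stdlib Require Import List.
Import ListNotations.

Inductive Form (P0 : Type) : Type :=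
| Var : P0 -> Form P0
| Bot : Form P0
| And : Form P0 -> Form P0 -> Form P0
| Imp : Form P0 -> Form P0 -> Form P0.
Arguments Var {P0} _.
Arguments Bot {P0}.
Arguments And {P0} _ _.
Arguments Imp {P0} _ _.

Definition countable (P0 : Type) : Prop :=
  exists f : P0 -> nat, forall x y, f x = f y -> x = y.

Definition FSet (P0 : Type) := Form P0 -> Prop.
Definition subset {P0} (G D : FSet P0) : Prop := forall x, G x -> D x.
Definition union {P0} (G D : FSet P0) : FSet P0 := fun x => G x \/ D x.
Definition single {P0} (a : Form P0) : FSet P0 := fun x => x = a.
Definition pair {P0} (a b : Form P0) : FSet P0 := fun x => x = a \/ x = b.
Definition emptyset {P0} : FSet P0 := fun _ => False.
Definition finite_set {P0} (G : FSet P0) : Prop :=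
  exists l : list (Form P0), forall x, G x <-> In x l.

Definition Cons (P0 : Type) := FSet P0 -> Form P0 -> Prop.

Section Rules.
Context {P0 : Type} (d : Cons P0).
Definition R_A := forall G phi, d (union G (single phi)) phi.
Definition R_Mon := forall G D phi, subset G D -> d G phi -> d D phi.
Definition R_Cut := forall G D psi phi,
  d (union G (single psi)) phi -> d D psi -> d (union G D) phi.
Definition R_Com := forall G phi, d G phi ->
  exists G', finite_set G' /\ subset G' G /\ d G' phi.
Definition R_AndI := forall phi psi, d (pair phi psi) (And phi psi).
Definition R_AndE := forall phi psi,
  d (single (And phi psi)) phi /\ d (single (And phi psi)) psi.
Definition R_Imp0 := forall phi, d emptyset (Imp phi phi).
Definition R_Imp1 := forall G phi psi, d G phi ->
  d (fun x => exists chi, G chi /\ x = Imp psi chi) (Imp psi phi).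
Definition R_Imp2 := forall phi psi chi,
  d (pair (Imp phi psi) (Imp psi chi)) (Imp phi chi).

Definition all_rules :=
  R_A /\ R_Mon /\ R_Cut /\ R_Com /\ R_AndI /\ R_AndE /\ R_Imp0 /\ R_Imp1 /\ R_Imp2.

Definition deduction_closed (D : FSet P0) := forall psi, d D psi -> D psi.

Definition R_imp (G D : FSet P0) :=
  forall phi psi, G (Imp phi psi) -> D phi -> D psi.

(* Gamma(Delta, chi); "alpha /\ chi -> psi" parses as (alpha /\ chi) -> psi *)
Definition GammaDC (G D : FSet P0) (chi : Form P0) : FSet P0 :=
  fun psi => exists alpha, D alpha /\ d G (Imp (And alpha chi) psi).
End Rules.

(* Main.v *)
Require Import Defs.
From Stdlib Require Import List Classical Arith Cantor Lia.
Import ListNotations.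

Section Proof.
Context {P0 : Type} (d : Cons P0).
Hypothesis HR : all_rules d.
Variable G : FSet P0.

Lemma rA : R_A d. Proof. apply HR. Qed.
Lemma rMon : R_Mon d. Proof. apply HR. Qed.
Lemma rCut : R_Cut d. Proof. apply HR. Qed.
Lemma rCom : R_Com d. Proof. apply HR. Qed.
Lemma rAndI : R_AndI d. Proof. apply HR. Qed.
Lemma rAndE : R_AndE d. Proof. apply HR. Qed.
Lemma rImp0 : R_Imp0 d. Proof. apply HR. Qed.
Lemma rImp1 : R_Imp1 d. Proof. apply HR. Qed.
Lemma rImp2 : R_Imp2 d. Proof. apply HR. Qed.

Lemma cut1 : forall H p q, d (union H (single p)) q -> d H p -> d H q.
Proof.
  intros H p q H1 H2. pose proof (rCut _ _ _ _ H1 H2) as H3.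
  eapply rMon; [|exact H3]. intros x [h|h]; exact h.
Qed.

Lemma inG : forall x, G x -> d G x.
Proof.
  intros x Hx. eapply rMon; [|apply (rA G x)].
  intros y [h|h]; [exact h| unfold single in h; subst; exact Hx].
Qed.

Lemma refl' : forall a, d G (Imp a a).
Proof. intros a. eapply rMon; [|apply rImp0]. intros x [] . Qed.

Lemma trans' : forall a b c, d G (Imp a b) -> d G (Imp b c) -> d G (Imp a c).
Proof.
  intros a b c H1 H2.
  apply (cut1 _ (Imp b c)); [|exact H2].
  apply (cut1 _ (Imp a b)).
  - eapply rMon; [|apply (rImp2 a b c)].
    intros x [h|h]; [right; exact h| left; right; exact h].
  - eapply rMon; [|exact H1]. intros x h; left; exact h.
Qed.

Lemma lsingle : forall x y z, d (single x) y -> d G (Imp z x) -> d G (Imp z y).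
Proof.
  intros x y z H1 H2. pose proof (rImp1 _ _ z H1) as H3.
  apply (cut1 _ (Imp z x)); [|exact H2].
  eapply rMon; [|exact H3]. intros w [c [h1 h2]]. unfold single in h1; subst.
  right. reflexivity.
Qed.

Lemma lpair : forall x y w z, d (pair x y) w -> d G (Imp z x) -> d G (Imp z y) -> d G (Imp z w).
Proof.
  intros x y w z H1 H2 H3. pose proof (rImp1 _ _ z H1) as H4.
  apply (cut1 _ (Imp z y)); [|exact H3].
  apply (cut1 _ (Imp z x)).
  - eapply rMon; [|exact H4]. intros u [c [[h1|h1] h2]]; subst.
    + right; reflexivity.
    + left; right; reflexivity.
  - eapply rMon; [|exact H2]. intros u h; left; exact h.
Qed.

Lemma andL : forall a b, d G (Imp (And a b) a).
Proof. intros. eapply lsingle; [first [apply (proj1 (rAndE a b))|apply (proj2 (rAndE a b))]|apply refl']. Qed.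
Lemma andR : forall a b, d G (Imp (And a b) b).
Proof. intros. eapply lsingle; [first [apply (proj1 (rAndE a b))|apply (proj2 (rAndE a b))]|apply refl']. Qed.
Lemma andI' : forall z a b, d G (Imp z a) -> d G (Imp z b) -> d G (Imp z (And a b)).
Proof. intros. eapply lpair; [apply rAndI| |]; eauto. Qed.

Variable psi : Form P0.

Definition filt (S : FSet P0) :=
  (forall a b, S a -> S b -> S (And a b)) /\ (forall a b, S a -> d G (Imp a b) -> S b).
Definition good (S : FSet P0) := forall a, S a -> ~ d G (Imp a psi).
Definition Ext (S : FSet P0) chi : FSet P0 :=
  fun b => exists dl, S dl /\ d G (Imp (And dl chi) b).

Lemma ext_filt : forall S chi, filt S -> filt (Ext S chi).
Proof.
  intros S chi [HA HU]. split.
  - intros a b [d1 [h1 h1']] [d2 [h2 h2']]. exists (And d1 d2). split; [auto|].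
    apply andI'.
    + eapply trans'; [|exact h1']. apply andI'; [|apply andR].
      eapply trans'; [apply andL|apply andL].
    + eapply trans'; [|exact h2']. apply andI'; [|apply andR].
      eapply trans'; [apply andL|apply andR].
  - intros a b [d1 [h1 h1']] h. exists d1. split; auto. eapply trans'; eauto.
Qed.

Variable enc : Form P0 -> nat.
Hypothesis enc_inj : forall x y, enc x = enc y -> x = y.

Definition step (n : nat) (S : FSet P0) : FSet P0 := fun b =>
  (exists chi, enc chi = n /\ good (Ext S chi) /\ Ext S chi b) \/
  (~ (exists chi, enc chi = n /\ good (Ext S chi)) /\ S b).

Variable phi : Form P0.
Hypothesis Hn : ~ d G (Imp phi psi).

Definition D0 : FSet P0 := fun b => d G (Imp phi b).

Fixpoint Dn (n : nat) : FSet P0 :=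
  match n with 0 => D0 | S n => step n (Dn n) end.

Lemma Dn_inv : forall n, filt (Dn n) /\ good (Dn n) /\ Dn n phi.
Proof.
  induction n as [|n [HF [HG Hp]]].
  - split; [split|split].
    + intros a b h1 h2. apply andI'; auto.
    + intros a b h1 h2. eapply trans'; eauto.
    + intros a h1 h2. apply Hn. eapply trans'; eauto.
    + apply refl'.
  - simpl. destruct (classic (exists chi, enc chi = n /\ good (Ext (Dn n) chi)))
      as [[chi [He Hg]]|Hno].
    + assert (E : forall b, step n (Dn n) b <-> Ext (Dn n) chi b).
      { intros b; split.
        - intros [[c [hc [hg hb]]]|[hn hb]].
          + rewrite <- He in hc. apply enc_inj in hc. subst; auto.
          + exfalso; apply hn; eauto.
        - intros h. left. eauto. }
      destruct (ext_filt _ chi HF) as [F1 F2].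
      split; [split|split].
      * intros a b h1 h2. apply E. apply E in h1. apply E in h2. auto.
      * intros a b h1 h2. apply E. apply E in h1. eauto.
      * intros a h. apply E in h. apply Hg; auto.
      * apply E. exists phi. split; auto. apply andL.
    + assert (E : forall b, step n (Dn n) b <-> Dn n b).
      { intros b; split.
        - intros [[c [hc [hg hb]]]|[hn hb]]; [exfalso; eauto|auto].
        - intros h. right. auto. }
      destruct HF as [F1 F2].
      split; [split|split].
      * intros a b h1 h2. apply E. apply E in h1. apply E in h2. auto.
      * intros a b h1 h2. apply E. apply E in h1. eauto.
      * intros a h. apply E in h. apply HG; auto.
      * apply E. auto.
Qed.

Lemma Dn_step : forall n b, Dn n b -> Dn (S n) b.
Proof.
  intros n b h. simpl.
  destruct (classic (exists chi, enc chi = n /\ good (Ext (Dn n) chi)))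
      as [[chi [He Hg]]|Hno].
  - left. exists chi. repeat split; auto. exists b. split; auto. apply andL.
  - right. auto.
Qed.

Lemma Dn_mono : forall n m b, n <= m -> Dn n b -> Dn m b.
Proof.
  intros n m b Hle. induction Hle; auto. intros h. apply Dn_step; auto.
Qed.

Definition Dl : FSet P0 := fun b => exists n, Dn n b.

Lemma Dl_filt : filt Dl.
Proof.
  split.
  - intros a b [n h1] [m h2]. exists (max n m).
    destruct (Dn_inv (max n m)) as [[F1 _] _].
    apply F1; [apply (Dn_mono n)|apply (Dn_mono m)]; auto; lia.
  - intros a b [n h1] h. exists n. destruct (Dn_inv n) as [[_ F2] _]. eauto.
Qed.

Lemma Dl_phi : Dl phi.
Proof. exists 0. apply (Dn_inv 0). Qed.

Lemma Dl_good : good Dl.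
Proof. intros a [n h]. apply (Dn_inv n). auto. Qed.

Lemma list_cut : forall y l (H : FSet P0), (forall x, H x -> In x l) ->
  (forall x, In x l -> d G x) -> d (union G H) y -> d G y.
Proof.
  intros y l. induction l as [|a l IH]; intros H h1 h2 h3.
  - eapply rMon; [|exact h3]. intros x [h|h]; auto. destruct (h1 x h).
  - apply (IH (fun x => H x /\ x <> a)).
    + intros x [hx hne]. destruct (h1 x hx); auto. subst; tauto.
    + intros x hx; apply h2; right; auto.
    + apply (cut1 _ a).
      * eapply rMon; [|exact h3]. intros x [h|h]; [left; left; auto|].
        destruct (classic (x = a)) as [e|e]; [right; exact e|left; right; auto].
      * eapply rMon; [|apply h2; left; auto]. intros x h; left; auto.
Qed.

Lemma conj_list : forall l, (forall x, In x l -> Dl x) ->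
  exists al, Dl al /\ forall x, In x l -> d G (Imp al x).
Proof.
  induction l as [|x l IH]; intros Hs.
  - exists phi. split; [apply Dl_phi|]. intros x [].
  - assert (hx : Dl x) by (apply Hs; left; auto).
    destruct IH as [al [h1 h2]]; [intros y hy; apply Hs; right; auto|].
    exists (And al x). split; [apply Dl_filt; auto|].
    intros y [e|e]; [subst; apply andR|].
    eapply trans'; [apply andL|auto].
Qed.

Lemma Dl_closed : deduction_closed d Dl.
Proof.
  intros b hb. destruct (rCom _ _ hb) as [G' [[l Hl] [Hsub HG']]].
  destruct (conj_list l) as [al [h1 h2]].
  { intros x hx. apply Hsub, Hl; auto. }
  pose proof (rImp1 _ _ al HG') as H3.
  apply (proj2 Dl_filt al b h1).
  apply (list_cut _ (map (Imp al) l) (fun x => exists chi, G' chi /\ x = Imp al chi)).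
  - intros x [c [hc e]]; subst. apply in_map. apply Hl; auto.
  - intros x hx. apply in_map_iff in hx. destruct hx as [c [e hc]]; subst. auto.
  - eapply rMon; [|exact H3]. intros x h; right; auto.
Qed.

Lemma Dl_last : forall chi, ~ Dl chi -> GammaDC d G Dl chi psi.
Proof.
  intros chi hc. set (n := enc chi).
  destruct (classic (good (Ext (Dn n) chi))) as [Hg|Hg].
  - exfalso. apply hc. exists (S n). simpl. left. exists chi. repeat split; auto.
    exists phi. split; [apply Dn_inv|apply andR].
  - apply NNPP. intro Hno. apply Hg. intros a [dl [h1 h2]] h3.
    apply Hno. exists dl. split; [exists n; auto|]. eapply trans'; eauto.
Qed.

Lemma Dl_Rimp : R_imp G Dl.
Proof.
  intros a b h1 h2. apply (proj2 Dl_filt a b h2). apply inG; auto.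
Qed.

Lemma Dl_psi : ~ Dl psi.
Proof. intros h. apply (Dl_good psi h). apply refl'. Qed.

End Proof.

Fixpoint encF {P0} (f : P0 -> nat) (x : Form P0) : nat :=
  match x with
  | Var p => to_nat (0, f p)
  | Bot => to_nat (1, 0)
  | And a b => to_nat (2, to_nat (encF f a, encF f b))
  | Imp a b => to_nat (3, to_nat (encF f a, encF f b))
  end.

Lemma to_nat_inj : forall p q, to_nat p = to_nat q -> p = q.
Proof.
  intros p q h. rewrite <- (cancel_of_to p), <- (cancel_of_to q), h. reflexivity.
Qed.

Lemma encF_inj {P0} (f : P0 -> nat) (Hf : forall x y, f x = f y -> x = y) :
  forall x y, encF f x = encF f y -> x = y.
Proof.
  induction x as [p| |a IHa b IHb|a IHa b IHb]; destruct y as [q| |c d|c d];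
    cbn [encF]; intros h; apply to_nat_inj in h; try discriminate; try reflexivity.
  - injection h as h1. f_equal; auto.
  - apply (f_equal snd) in h. cbn [snd] in h. apply to_nat_inj in h.
    injection h as h2 h3. f_equal; auto.
  - apply (f_equal snd) in h. cbn [snd] in h. apply to_nat_inj in h.
    injection h as h2 h3. f_equal; auto.
Qed.

Theorem mainTheorem10 (P0 : Type) (HP0 : countable P0) (d : Cons P0) :
  all_rules d ->
  forall (phi psi : Form P0) (G : FSet P0),
    ~ d G (Imp phi psi) ->
    exists D : FSet P0,
      deduction_closed d D /\ D phi /\ ~ D psi /\ R_imp G D /\
      (forall chi, ~ D chi -> GammaDC d G D chi psi).
Proof.
  intros HR phi psi G Hn. destruct HP0 as [f Hf].
  exists (Dl d G psi (encF f) phi).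
  split; [apply Dl_closed; auto; apply encF_inj; auto|].
  split; [apply Dl_phi; auto; apply encF_inj; auto|].
  split; [apply Dl_psi; auto; apply encF_inj; auto|].
  split; [apply Dl_Rimp; auto; apply encF_inj; auto|].
  apply Dl_last; auto; apply encF_inj; auto.
Qed.
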